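(* Let $S\subseteq\mathbb{N}_0$ be a free numerical semigroup. Then $S=\langle G'\rangle$ for some sequence $G'$ that is both telescopic and minimal.
   Context: For a finite sequence $G=(g_1,\dots,g_k)\in\mathbb{N}_0^k$, $\langle G\rangle$ is the set of $\mathbb{N}_0$-linear combinations of its entries; $G$ is minimal if no proper subsequence generates the same set. With $G_i=(g_1,\dots,g_i)$, $d_i=\gcd(G_i)$, and (for $g_1+g_2>0$, or $g_1>0$ if $k=1$) $c_j=d_{j-1}/d_j$ for $2\le j\le k$, $G$ is telescopic if $c_jg_j\in\langle G_{j-1}\rangle$ for all $2\le j\le k$. A numerical semigroup is a submonoid of $\mathbb{N}_0$ with finite complement; it is free if it equals $\langle G\rangle$ for some telescopic sequence $G$ with $\gcd(G)=1$ (not necessarily minimal). *)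

(* Defs.v *)
From mathcomp Require Import all_boot.
Set Implicit Arguments. Unset Strict Implicit. Unset Printing Implicit Defensive.

Definition gen (G : seq nat) (n : nat) : Prop :=
  exists cs : seq nat, size cs = size G /\
    n = \sum_(i < size G) nth 0 cs i * nth 0 G i.

Definition minimal (G : seq nat) : Prop :=
  forall H : seq nat, subseq H G -> size H < size G ->
    ~ (forall n, gen H n <-> gen G n).

(* d_i = gcd(g_1,...,g_i)  (d_0 = 0) *)
Definition dgcd (G : seq nat) (i : nat) : nat := foldr gcdn 0 (take i G).

Definition cc (G : seq nat) (j : nat) : nat := dgcd G j.-1 %/ dgcd G j.

(* The side condition making the c_j well defined:
   g_1 + g_2 > 0 if k >= 2, g_1 > 0 if k = 1. *)
Definition tele_defined (G : seq nat) : Prop :=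
  if size G == 1 then 0 < nth 0 G 0
  else (1 < size G) && (0 < nth 0 G 0 + nth 0 G 1).

Definition telescopic (G : seq nat) : Prop :=
  tele_defined G /\
  forall j, 2 <= j <= size G -> gen (take j.-1 G) (cc G j * nth 0 G j.-1).

Definition numerical_semigroup (S : nat -> Prop) : Prop :=
  S 0 /\ (forall a b, S a -> S b -> S (a + b)) /\
  (exists N, forall n, N <= n -> S n).

Definition free_semigroup (S : nat -> Prop) : Prop :=
  exists G : seq nat, telescopic G /\ foldr gcdn 0 G = 1 /\
    (forall n, S n <-> gen G n).

(* Main.v *)
Require Import Defs.
From mathcomp Require Import all_boot.
From mathcomp Require Import zify.
From Stdlib Require Import Classical.

Lemma coprime_divg m n : 0 < gcdn m n -> coprime (m %/ gcdn m n) (n %/ gcdn m n).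
Proof.
move=> g0; rewrite /coprime; apply/eqP.
have: gcdn (m %/ gcdn m n) (n %/ gcdn m n) * gcdn m n = 1 * gcdn m n.
  by rewrite muln_gcdl !divnK ?dvdn_gcdl ?dvdn_gcdr ?mul1n.
by move=> /eqP; rewrite eqn_pmul2r // => /eqP.
Qed.

Definition gL (s : seq nat) := foldr gcdn 0 s.

Fixpoint genr (G : seq nat) (n : nat) : Prop :=
  match G with
  | [::] => n = 0
  | a :: G' => exists m t, n = m * a + t /\ genr G' t
  end.

Lemma gen_genr G n : gen G n <-> genr G n.
Proof.
elim: G n => [|a G IH] n /=.
  split; first by case=> cs [_ ->]; rewrite big_ord0.
  by move=> ->; exists [::]; split=> //; rewrite big_ord0.
split.
  case=> cs [] /=; case: cs => [|c cs] //= [Hs] ->.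
  rewrite big_ord_recl /=; exists c, (\sum_(i < size G) nth 0 cs i * nth 0 G i).
  split=> //; apply/IH; by exists cs.
case=> m [t [-> /IH [cs [Hs ->]]]].
exists (m :: cs); split; first by rewrite /= Hs.
by rewrite big_ord_recl /=.
Qed.

Lemma genr0 G : genr G 0.
Proof. elim: G => [|a G IH] //=; by exists 0, 0. Qed.

Lemma genrD G u v : genr G u -> genr G v -> genr G (u + v).
Proof.
elim: G u v => [|a G IH] u v /=; first by move=> -> ->.
case=> m [t [-> Ht]] [m' [t' [-> Ht']]].
exists (m + m'), (t + t'); split; [lia | exact: IH].
Qed.

Lemma genrM G k u : genr G u -> genr G (k * u).
Proof.
elim: G u => [|a G IH] u /=; first by move=> ->; rewrite muln0.
case=> m [t [-> Ht]]; exists (k * m), (k * t); split; [lia | exact: IH].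
Qed.

Lemma genr_cat A B n : genr (A ++ B) n <-> exists u v, n = u + v /\ genr A u /\ genr B v.
Proof.
elim: A n => [|a A IH] n /=.
  split; [move=> H; exists 0, n; split=> // | by case=> u [v [-> [-> H]]]].
split.
  case=> m [t [-> /IH [u [v [-> [Hu Hv]]]]]].
  exists (m * a + u), v; split; first lia.
  split=> //; by exists m, u.
case=> u [v [-> [[m [t [-> Ht]]] Hv]]].
exists m, (t + v); split; first lia.
apply/IH; by exists t, v.
Qed.

Lemma genr_mem G x : x \in G -> genr G x.
Proof.
elim: G => [|a G IH] //=; rewrite in_cons; case/orP.
  move/eqP=> ->; exists 1, 0; split; [lia | exact: genr0].
by move/IH => H; exists 0, x.
Qed.

Lemma genr_sub A B : (forall y, y \in A -> genr B y) -> forall n, genr A n -> genr B n.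
Proof.
elim: A => [|a A IH] HA n /=; first by move=> ->; exact: genr0.
case=> m [t [-> Ht]]; apply: genrD.
  by apply: genrM; apply: HA; rewrite in_cons eqxx.
apply: IH Ht => y Hy; apply: HA; by rewrite in_cons Hy orbT.
Qed.

Lemma genr_eqmem A B : A =i B -> forall n, genr A n <-> genr B n.
Proof.
move=> E n; split; apply: genr_sub => y Hy; apply: genr_mem; by rewrite ?E // -E.
Qed.

Lemma genr_catl A B n : genr A n -> genr (A ++ B) n.
Proof. move=> H; apply/genr_cat; exists n, 0; split; [lia | split=> //; exact: genr0]. Qed.

Lemma genr_catr A B n : genr B n -> genr (A ++ B) n.
Proof. move=> H; apply/genr_cat; exists 0, n; split; [lia | split=> //; exact: genr0]. Qed.

Lemma genr1 x t : genr [:: x] t <-> exists a, t = a * x.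
Proof.
split=> /=; first by case=> m [t' [-> ->]]; exists m; rewrite addn0.
by case=> a ->; exists a, 0; rewrite addn0.
Qed.

Lemma genr_dvd G n : genr G n -> gL G %| n.
Proof.
elim: G n => [|a G IH] n /=; first by move=> ->.
case=> m [t [-> Ht]]; apply: dvdn_add.
  by apply: dvdn_mull; exact: dvdn_gcdl.
by apply: dvdn_trans (IH _ Ht); exact: dvdn_gcdr.
Qed.

Lemma gL_mem G x : x \in G -> gL G %| x.
Proof. by move/genr_mem/genr_dvd. Qed.

Lemma dvd_gL G d : (forall x, x \in G -> d %| x) -> d %| gL G.
Proof.
elim: G => [|a G IH] H //=; rewrite dvdn_gcd H ?in_cons ?eqxx //=.
apply: IH => x Hx; apply: H; by rewrite in_cons Hx orbT.
Qed.

Lemma gL_eq A B : (forall n, genr A n <-> genr B n) -> gL A = gL B.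
Proof.
move=> E; apply/eqP; rewrite eqn_dvd; apply/andP; split; apply: dvd_gL => x Hx.
  by apply: genr_dvd; apply/E; apply: genr_mem.
by apply: genr_dvd; apply/E; apply: genr_mem.
Qed.

Lemma gL_rcons A x : gL (A ++ [:: x]) = gcdn (gL A) x.
Proof.
elim: A => [|a A IH] /=; first by rewrite gcdn0 gcd0n.
by rewrite IH gcdnA.
Qed.

Definition cval A x := gL A %/ gcdn (gL A) x * x.
Definition TC G := forall A x B, G = A ++ x :: B -> 0 < size A -> genr A (cval A x).
Definition tele G := 0 < sumn (take 2 G) /\ TC G.

Lemma tele_equiv G : telescopic G <-> tele G.
Proof.
have Htd : tele_defined G <-> 0 < sumn (take 2 G).
  by case: G => [|a [|b G]]; rewrite /tele_defined /= ?take0 ?addn0; split.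
rewrite /telescopic /tele Htd; split; case=> H1 H2; split=> //.
  move=> A x B E HA; rewrite E in H2.
  have := H2 (size A).+1; rewrite size_cat /= ltnS HA.
  have -> : size A < size A + (size B).+1 by lia.
  move=> /(_ isT); rewrite /= take_size_cat // gen_genr.
  rewrite /cc /dgcd /= take_size_cat //.
  have -> : take (size A).+1 (A ++ x :: B) = A ++ [:: x].
    by rewrite take_cat ltnNge leqnSn /= subSnn /= take0.
  rewrite nth_cat ltnn subnn /= -/(gL A) -/(gL (A ++ [:: x])) gL_rcons.
  by rewrite /cval.
move=> [|i] // /andP [Hj1 Hj2] /=.
have Hi : i < size G by lia.
have E : G = take i G ++ nth 0 G i :: drop i.+1 G.
  by rewrite -drop_nth // cat_take_drop.
have := H2 _ _ _ E; rewrite size_takel; last lia.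
move=> /(_ ltac:(lia)); rewrite gen_genr /cc /dgcd /=.
rewrite (take_nth 0 Hi) -cats1. by have := gL_rcons (take i G) (nth 0 G i); rewrite /gL /cval => ->.
Qed.

Lemma split_cat (A B A1 B1 : seq nat) y : A ++ B = A1 ++ y :: B1 ->
  (exists A2, A = A1 ++ y :: A2 /\ B1 = A2 ++ B) \/
  (exists B0, B = B0 ++ y :: B1 /\ A1 = A ++ B0).
Proof.
elim: A A1 => [|a A IH] A1 /= E.
  by right; exists A1.
case: A1 E => [|a1 A1] /=.
  by case=> -> <-; left; exists A.
case=> -> /IH [[A2 [-> ->]]|[B0 [-> ->]]].
  by left; exists A2.
by right; exists B0.
Qed.

Ltac memt := let z := fresh "z" in move=> z; rewrite !(mem_cat, in_cons, in_nil);
  repeat match goal with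
  | |- context[z \in ?A] => case: (z \in A)
  | |- context[z == ?x] => case: (z == x) end; by [].

Ltac memb := rewrite ?(mem_cat, in_cons, in_nil);
  repeat match goal with
  | |- context[?z \in ?A] => case: (z \in A)
  | |- context[?z == ?x] => case: (z == x) end; by [].

Lemma genr_subm A B : {subset A <= B} -> forall n, genr A n -> genr B n.
Proof. move=> H; apply: genr_sub => y /H; exact: genr_mem. Qed.

Lemma test (A B : seq nat) x y : {subset A ++ x :: B <= y :: B ++ x :: A}.
Proof. memt. Qed.

Lemma tele_remove A x B : tele (A ++ x :: B) -> genr A x -> tele (A ++ B).
Proof.
move=> [Htd HT] Hx; split.
  move: Htd Hx; clear HT; case: A => [|a [|b A]] /= Htd.
  - by move=> Ex; subst x; case: B Htd => [|b [|c B]] /=; rewrite ?take0 /=; lia.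
  - case=> m [t [Ex Et]]; subst; case: B Htd => [|b [|c B]] /=; rewrite ?take0 /=; nia.
  - by move: Htd; rewrite !take0.
move=> A1 y B1 E HA1; case: (split_cat _ _ _ _ _ E) => [[A2 [EA EB]]|[B0 [EB EA]]].
  by apply: (HT A1 y (A2 ++ x :: B)) HA1; rewrite EA -catA.
subst.
have Eq : forall n, genr (A ++ x :: B0) n <-> genr (A ++ B0) n.
  move=> n; split; last by apply: genr_subm; memt.
  apply: genr_sub => z; rewrite mem_cat in_cons; case: eqP => [-> _|_ Hz].
    exact: genr_catl.
  by apply: genr_mem; rewrite mem_cat.
have := HT (A ++ x :: B0) y B1; rewrite -catA /= => /(_ erefl).
rewrite size_cat /= addnS ltnS leq0n => /(_ isT).
by rewrite /cval (gL_eq _ _ Eq) => /Eq.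
Qed.

Lemma KA D x f : 0 < D -> D %| f -> f %| (D %/ gcdn D x) * x ->
  gcdn f x = f %/ (D %/ gcdn D x) /\ (D %/ gcdn D x) %| f.
Proof.
move=> D0 Df fcx.
have e0 : 0 < gcdn D x by rewrite gcdn_gt0 D0.
have De : D = (D %/ gcdn D x) * gcdn D x by rewrite divnK ?dvdn_gcdl.
have cop := coprime_divg D x e0.
move: De fcx cop; set e := gcdn D x; set c := D %/ e => De fcx cop.
have c0 : 0 < c by move: D0; rewrite De muln_gt0 => /andP [].
have cf : c %| f by apply: dvdn_trans Df; rewrite De dvdn_mulr.
split=> //.
case/dvdnP: cf => h Ef; rewrite Ef mulnK //.
have eh : e %| h.
  by move: Df; rewrite De Ef [c * e]mulnC dvdn_pmul2r.
have hx : h %| x by move: fcx; rewrite Ef mulnC dvdn_pmul2l.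
case/dvdnP: eh => h' Eh; case/dvdnP: hx => x'' Ex.
have : x %/ e = x'' * h' by rewrite Ex Eh mulnA mulnK.
move=> Ex'; move: cop; rewrite Ex' coprimeMr => /andP [cx _].
rewrite Ex mulnC -muln_gcdl.
by move: cx; rewrite /coprime => /eqP ->; rewrite mul1n.
Qed.

Lemma AR c h r x : 0 < c -> 0 < h ->
  (r * (h * c)) %/ h * x = (r * (h * c)) %/ (h * c) * (c * x).
Proof.
move=> c0 h0.
have -> : r * (h * c) = (r * c) * h by rewrite mulnCA mulnC.
rewrite mulnK // -[r * c * h]mulnA [h * c]mulnC mulnK ?muln_gt0 ?h0 ?c0 //.
by rewrite mulnA.
Qed.

Lemma AR2 c h r y : 0 < c -> 0 < h ->
  (r * (h * c)) %/ c %/ ((h * c) %/ c) * y = (r * (h * c)) %/ (h * c) * y.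
Proof.
move=> c0 h0.
by rewrite mulnA mulnK // mulnK // mulnK // -mulnA mulnK // muln_gt0 h0 c0.
Qed.

Lemma genr_ext A B : (forall y, y \in A -> genr B y) -> (forall y, y \in B -> genr A y) ->
  forall n, genr A n <-> genr B n.
Proof. by move=> H1 H2 n; split; apply: genr_sub. Qed.

Lemma tele_replace P1 g P2 x R :
  tele ((P1 ++ g :: P2) ++ x :: R) -> 0 < x -> 0 < gL (P1 ++ g :: P2) ->
  g = cval (P1 ++ g :: P2) x -> tele (P1 ++ x :: P2 ++ R).
Proof.
move=> [Htd HT] x0 D0 Eg.
move: Eg D0; rewrite /cval; set D := gL _; set c := D %/ gcdn D x => Eg D0.
have c0 : 0 < c by rewrite /c divn_gt0 ?gcdn_gt0 ?D0 // dvdn_leq // dvdn_gcdl.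
have KQ : forall Q, {subset Q <= P1 ++ g :: P2} -> g \in Q ->
   [/\ gcdn (gL Q) x = gL Q %/ c, c %| gL Q & 0 < gL Q].
  move=> Q sQ gQ.
  have h1 : D %| gL Q by apply: dvd_gL => z /sQ; apply: gL_mem.
  have h2 : gL Q %| c * x by rewrite -Eg; apply: gL_mem.
  have [k1 k2] := KA D x (gL Q) D0 h1 h2.
  split=> //; case: (posnP (gL Q)) => // Q0.
  by move: h2; rewrite Q0 dvd0n muln_eq0 => /orP [] /eqP E; move: c0 x0; rewrite E.
have gx : genr (P1 ++ x :: P2 ++ R) g.
  by rewrite Eg; apply: genrM; apply: genr_mem; rewrite mem_cat in_cons eqxx orbT.
rewrite -catA /= in HT Htd.
split.
  move: x0 Htd; clear; case: P1 => [|a [|b P1]] /=; rewrite ?take0 //=; lia.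
move=> A1 y B1 E HA1.
case: (split_cat _ _ _ _ _ E) => [[A2 [EA EB]]|[B0 [EB EA]]].
  by apply: (HT A1 y (A2 ++ g :: P2 ++ x :: R)) HA1; rewrite EA -catA.
case: B0 EB EA => [|b B0] /=.
  case=> <- _; rewrite cats0 => EA; subst A1.
  have := HT P1 g (P2 ++ x :: R) erefl HA1.
  have s1 : {subset P1 ++ [:: g] <= P1 ++ g :: P2} by memt.
  have s2 : g \in P1 ++ [:: g] by rewrite mem_cat in_cons eqxx orbT.
  have [k1 k2 k3] := KQ (P1 ++ [:: g]) s1 s2.
  move: k1 k2 k3; rewrite gL_rcons => k1 k2 k3.
  rewrite /cval => H.
  have -> : gcdn (gL P1) x = gcdn (gcdn (gL P1) g) x.
    by rewrite -gcdnA Eg [gcdn (c * x) x]gcdnC gcdnMl.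
  rewrite k1; move: k2 k3 (dvdn_gcdl (gL P1) g) H; set d1 := gcdn (gL P1) g.
  move=> k2 k3 /dvdnP [r Er]; case/dvdnP: k2 => h Eh.
  rewrite Er Eh Eg; rewrite Eh in k3 => H.
  have h0 : 0 < h by move: k3; rewrite muln_gt0 => /andP [].
  by rewrite mulnK // AR.
case=> Eb E2 EA; subst b.
case: (split_cat _ _ _ _ _ E2) => [[A2 [EP EB]]|[R0 [ER EB]]].
  subst P2 A1 B1.
  have := HT (P1 ++ g :: B0) y (A2 ++ x :: R); rewrite -catA /= -catA /= => /(_ erefl).
  rewrite size_cat /= addnS ltnS leq0n => /(_ isT).
  set Ag := P1 ++ g :: B0.
  have sub1 : forall n, genr Ag n -> genr (P1 ++ x :: B0) n.
    apply: genr_sub => z Hz; case: (eqVneq z g) => [->|ne].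
      by rewrite Eg; apply: genrM; apply: genr_mem; rewrite mem_cat in_cons eqxx orbT.
    by apply: genr_mem; move: Hz ne; memb.
  have eqA : gL (P1 ++ x :: B0) = gcdn x (gL Ag).
    have -> : gcdn x (gL Ag) = gL (x :: Ag) by [].
    apply: gL_eq; apply: genr_ext => z.
      move=> Hz; apply: genr_mem; move: Hz; memb.
    rewrite in_cons; case: eqP => [-> _|_ Hz].
      by apply: genr_mem; rewrite mem_cat in_cons eqxx orbT.
    by apply: sub1; apply: genr_mem.
  have s1 : {subset Ag <= P1 ++ g :: B0 ++ y :: A2} by rewrite /Ag; memt.
  have s2 : g \in Ag by rewrite /Ag mem_cat in_cons eqxx orbT.
  have s3 : {subset Ag ++ [:: y] <= P1 ++ g :: B0 ++ y :: A2} by rewrite /Ag; memt.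
  have s4 : g \in Ag ++ [:: y] by rewrite mem_cat s2.
  have [k1 k2 k3] := KQ Ag s1 s2.
  have [l1 l2 l3] := KQ (Ag ++ [:: y]) s3 s4.
  move: l1 l2 l3; rewrite gL_rcons => l1 l2 l3.
  move=> H; apply: sub1; move: H.
  have -> : cval (P1 ++ x :: B0) y = cval Ag y.
    have F1 : gcdn x (gL Ag) = gL Ag %/ c by rewrite gcdnC k1.
    have F2 : gcdn (gL Ag %/ c) y = gcdn (gL Ag) y %/ c by rewrite -k1 gcdnAC l1.
    rewrite /cval eqA F1 F2.
    move: l2 l3 (dvdn_gcdl (gL Ag) y); set f2 := gcdn (gL Ag) y.
    move=> l2 l3 /dvdnP [r Er]; case/dvdnP: l2 => h Eh.
    rewrite Er Eh; rewrite Eh in l3.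
    have h0 : 0 < h by move: l3; rewrite muln_gt0 => /andP [].
    by rewrite AR2.
  done.
subst R A1 B0.
have Heq : P1 ++ g :: P2 ++ x :: R0 ++ y :: B1 = (P1 ++ g :: P2 ++ x :: R0) ++ y :: B1.
  by rewrite -catA /= -catA.
have := HT (P1 ++ g :: P2 ++ x :: R0) y B1 Heq.
rewrite size_cat /= addnS ltnS leq0n => /(_ isT).
have Eq : forall n, genr (P1 ++ g :: P2 ++ x :: R0) n <-> genr (P1 ++ x :: P2 ++ R0) n.
  apply: genr_ext => z.
    move=> Hz; case: (eqVneq z g) => [->|ne].
      by rewrite Eg; apply: genrM; apply: genr_mem; rewrite mem_cat in_cons eqxx orbT.
    by apply: genr_mem; move: Hz ne; memb.
  by move=> Hz; apply: genr_mem; move: Hz; memb.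
by rewrite /cval (gL_eq _ _ Eq) => /Eq.
Qed.

Definition noRed G := forall A (g : nat) B, G = A ++ g :: B -> ~ genr (A ++ B) g.

Lemma reduce G : tele G -> noRed G \/
  exists G', tele G' /\ size G' < size G /\ (forall n, genr G' n <-> genr G n).
Proof.
move=> HG.
suff H : forall P Q, G = P ++ Q -> noRed P \/
  exists G', tele G' /\ size G' < size G /\ (forall n, genr G' n <-> genr G n).
  by apply: (H G [::]); rewrite cats0.
elim/last_ind => [|P0 x IH] Q EG.
  by left => A g B; case: A.
have EG' : G = P0 ++ x :: Q by rewrite EG cat_rcons.
case: (IH _ EG') => [NR|]; last by right.
case: (classic (exists G', tele G' /\ size G' < size G /\
  (forall n, genr G' n <-> genr G n))) => [Hex|Hno]; first by right.
left => A g B E Hg; apply: Hno.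
case: (lastP B) E Hg => [|B' b].
  rewrite cats1 => /rcons_inj [EP Ex]; subst P0 x; rewrite cats0 => Hg.
  exists (A ++ Q); split; first by rewrite EG' in HG; exact: tele_remove HG Hg.
  split; first by rewrite EG' !size_cat /=; lia.
  apply: genr_ext => z.
    by move=> Hz; apply: genr_mem; rewrite EG'; move: Hz; memb.
  move=> Hz; case: (eqVneq z g) => [->|ne]; first exact: genr_catl.
  by apply: genr_mem; move: Hz ne; rewrite EG'; memb.
rewrite -rcons_cons -rcons_cat => /rcons_inj [EP Ex]; subst P0 b => Hg.
have nr : ~ genr (A ++ B') g := NR A g B' erefl.
have Dg : gL (A ++ g :: B') %| g by apply: gL_mem; rewrite mem_cat in_cons eqxx orbT.
move: Hg; rewrite -cats1 catA => /genr_cat [u [v [Eu [Hu /genr1 [a Ev]]]]].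
have Du : gL (A ++ g :: B') %| u.
  apply: genr_dvd; apply: genr_subm Hu; memt.
have Dax : gL (A ++ g :: B') %| a * x.
  have : gL (A ++ g :: B') %| u + a * x by rewrite -Ev -Eu.
  by rewrite (dvdn_addr _ Du).
have g0 : 0 < g.
  by case: (posnP g) => // g0; case: nr; rewrite g0; exact: genr0.
have D0 : 0 < gL (A ++ g :: B').
  case: (posnP (gL (A ++ g :: B'))) => // D0; move: Dg; rewrite D0 dvd0n => /eqP g00.
  by rewrite g00 in g0.
have e0 : 0 < gcdn (gL (A ++ g :: B')) x by rewrite gcdn_gt0 D0.
have cop := coprime_divg (gL (A ++ g :: B')) x e0.
have HTx := (proj2 HG) (A ++ g :: B') x Q EG' ltac:(by rewrite size_cat /= addnS).
move: HTx Dax cop; rewrite /cval.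
set e := gcdn (gL (A ++ g :: B')) x; set c := gL (A ++ g :: B') %/ e => HTx Dax cop.
have ca : c %| a.
  have De : gL (A ++ g :: B') = c * e by rewrite divnK ?dvdn_gcdl.
  have Xe : x = (x %/ e) * e by rewrite divnK ?dvdn_gcdr.
  move: Dax; rewrite {1}De {1}Xe mulnA dvdn_pmul2r //.
  by rewrite Gauss_dvdl.
case/dvdnP: ca => m Ea.
have : genr (g :: A ++ B') (c * x) by apply: genr_subm HTx; memt.
case=> b [w [Ecx Hw]].
have Egc : g = c * x.
  case: (posnP m) => [m0|m0].
    by case: nr; rewrite Eu Ev Ea m0 !mul0n addn0.
  case: (posnP b) => [b0|b0].
    case: nr; rewrite Eu Ev Ea -mulnA Ecx b0 mul0n add0n.
    by apply: genrD Hu (genrM _ _ _ Hw).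
  move: Eu; rewrite Ev Ea -mulnA Ecx => Eu.
  have h1 : b * g + w <= m * (b * g + w) by apply: leq_pmull.
  have h2 : g <= b * g by apply: leq_pmull.
  clear -Eu h1 h2; lia.
have x0 : 0 < x.
  by case: (posnP x) => // x00; move: g0; rewrite Egc x00 muln0.
exists (A ++ x :: B' ++ Q); split.
  apply: (tele_replace A g B' x Q) => //; first by rewrite -EG'.
split; first by rewrite EG' !size_cat /= size_cat; lia.
apply: genr_ext => z.
  by move=> Hz; apply: genr_mem; rewrite EG'; move: Hz; memb.
move=> Hz; case: (eqVneq z g) => [->|ne].
  by rewrite Egc; apply: genrM; apply: genr_mem; rewrite mem_cat in_cons eqxx orbT.
by apply: genr_mem; move: Hz ne; rewrite EG'; memb.
Qed.

Lemma subseq_split (H G : seq nat) : subseq H G -> size H < size G ->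
  exists A g B, G = A ++ g :: B /\ subseq H (A ++ B).
Proof.
elim: G H => [|a G IH] [|h H] //= Hs Hsz.
  by exists [::], a, G; split=> //; exact: sub0seq.
move: Hs; case: eqP => [<-|ne] Hs.
  have [A [g [B [-> HS]]]] := IH H Hs Hsz.
  by exists (h :: A), g, B; split=> //=; rewrite eqxx.
by exists [::], a, G; split.
Qed.

Lemma noRed_minimal G : noRed G -> minimal G.
Proof.
move=> NR H Hs Hsz Heq.
have [A [g [B [EG HS]]]] := subseq_split H G Hs Hsz.
apply: (NR A g B EG); apply: (genr_subm _ _ (mem_subseq HS)).
apply/gen_genr/Heq/gen_genr; apply: genr_mem; by rewrite EG mem_cat in_cons eqxx orbT.
Qed.

Lemma main_aux n : forall G, size G <= n -> tele G ->
  exists G', tele G' /\ noRed G' /\ (forall m, genr G' m <-> genr G m).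
Proof.
elim: n => [|n IH] G Hs HG.
  by case: G Hs HG => // _ [].
case: (reduce G HG) => [NR|[G' [HG' [Hsz Heq]]]].
  by exists G; split=> //; split.
have [G'' [H1 [H2 H3]]] := IH G' ltac:(lia) HG'.
exists G''; split=> //; split=> // m.
by split=> Hm; [apply/Heq/H3 | apply/H3/Heq].
Qed.

Theorem mainTheorem2 (S : nat -> Prop) :
  numerical_semigroup S -> free_semigroup S ->
  exists G' : seq nat, telescopic G' /\ minimal G' /\
    (forall n, S n <-> gen G' n).
Proof.
move=> _ [G [HtG [_ HS]]].
have [G' [H1 [H2 H3]]] := main_aux (size G) G (leqnn _) ((tele_equiv G).1 HtG).
exists G'; split; first exact/tele_equiv.
split; first exact: noRed_minimal.
move=> n; split=> Hn.
  by apply/gen_genr/H3/gen_genr/HS.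
by apply/HS/gen_genr/H3/gen_genr.
Qed.
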